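(* Let $\Gamma$ be a weighted digraph with vertex set $\{1,\dots,n\}$, $n>1$, without loops and with strictly positive arc weights, with Laplacian matrix $L$. Let $\lambda_i\neq0$ be an eigenvalue of $L$. Then every nonzero column of $Q(-\lambda_i^{-1})$ is an eigenvector of $L$ corresponding to $\lambda_i$.
   Context: $W=(w_{ij})$ is the matrix of arc weights ($w_{ij}>0$ iff there is an arc $i\to j$, else $0$). The Laplacian $L=(\ell_{ij})$: $\ell_{ij}=-w_{ij}$ for $j\ne i$, $\ell_{ii}=\sum_{k\ne i}w_{ik}$. The weight of a subgraph is the product of its arc weights (1 if no arcs); the weight of a set of subgraphs is the sum of their weights (0 for the empty set). A converging tree is a weakly connected digraph with one vertex (the root) of outdegree 0 and all others of outdegree 1; an in-forest is a spanning subgraph of $\Gamma$ whose weak components are converging trees. $Q_k=(q^k_{ij})$ where $q^k_{ij}$ is the total weight of in-forests with $k$ arcs in which $i$ lies in a tree rooted at $j$, and for $\tau\in\mathbb C$, $Q(\tau)=\sum_{k\ge0}Q_k\tau^k$ (a finite sum). *)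

(* Defs.v *)
From HB Require Import structures.
From mathcomp Require Import all_boot all_order all_algebra.
Set Implicit Arguments. Unset Strict Implicit. Unset Printing Implicit Defensive.
Import Order.TTheory GRing.Theory Num.Theory.
Local Open Scope ring_scope.

(* Scalars live in a numeric closed field C (e.g. the complex
   numbers); arc weights are nonnegative elements of C (hence real).  A weighted digraph is given by its weight matrix W:
   there is an arc i -> j iff i != j and W i j != 0 (then W i j > 0). *)

Section Forests.
Variables (C : numClosedFieldType) (n : nat) (W : 'M[C]_n).

Definition is_arc (a : 'I_n * 'I_n) : bool := (a.1 != a.2) && (W a.1 a.2 != 0).

Definition laplacian : 'M[C]_n :=
  \matrix_(i, j) (if i == j then \sum_(k | k != i) W i k else - W i j).

(* A subgraph (spanning, on all vertices) is a set of arcs of Gamma. *)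
Definition outdeg (F : {set 'I_n * 'I_n}) (v : 'I_n) : nat :=
  #|[set a in F | a.1 == v]|.

Definition weakly_conn (F : {set 'I_n * 'I_n}) : rel 'I_n :=
  connect [rel x y | ((x, y) \in F) || ((y, x) \in F)].

Definition wcomp (F : {set 'I_n * 'I_n}) (x : 'I_n) : {set 'I_n} :=
  [set y | weakly_conn F x y].

(* a weak component is a converging tree: exactly one vertex (the root) of
   outdegree 0, all other vertices of outdegree 1 (it is weakly connected by
   construction). *)
Definition converging_tree_comp (F : {set 'I_n * 'I_n}) (S : {set 'I_n}) : bool :=
  [exists r in S, (outdeg F r == 0%N) &&
     [forall v in S, (v != r) ==> (outdeg F v == 1%N)]].

Definition in_forest (F : {set 'I_n * 'I_n}) : bool :=
  [forall a in F, is_arc a] && [forall x, converging_tree_comp F (wcomp F x)].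

Definition in_tree_rooted (F : {set 'I_n * 'I_n}) (i j : 'I_n) : bool :=
  weakly_conn F i j && (outdeg F j == 0%N).

Definition sg_weight (F : {set 'I_n * 'I_n}) : C := \prod_(a in F) W a.1 a.2.

Definition Qk (k : nat) : 'M[C]_n :=
  \matrix_(i, j) \sum_(F : {set 'I_n * 'I_n} | in_forest F && (#|F| == k)
                                             && in_tree_rooted F i j) sg_weight F.

(* Q(tau) = sum_k Q_k tau^k; Q_k = 0 for k > n*n since a subgraph has at most
   n*n arcs, so this finite sum is the whole sum. *)
Definition Qtau (tau : C) : 'M[C]_n := \sum_(k < (n * n).+1) tau ^+ k *: Qk k.

End Forests.

(* Main.v *)
Require Import Defs.
From HB Require Import structures.
From mathcomp Require Import all_boot all_order all_algebra.
Set Implicit Arguments. Unset Strict Implicit. Unset Printing Implicit Defensive.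
Import Order.TTheory GRing.Theory Num.Theory.

Section Par.
Variable n : nat.
Notation V := 'I_n.
Implicit Types (p : {ffun V -> V}) (v i m : V).

Definition proot p v := iter n p v.
Definition acyc p := [forall v, p (proot p v) == proot p v].
Definition reach p v := exists k, p (iter k p v) = iter k p v.
Definition bnf p v k : nat := p (iter k p v) != iter k p v.
Definition hgt p v := (\sum_(0 <= k < n) bnf p v k)%N.
Definition upd p i m : {ffun V -> V} := [ffun v => if v == i then m else p v].

Lemma updE p i m v : upd p i m v = if v == i then m else p v.
Proof. by rewrite ffunE. Qed.

Lemma rootP p v : acyc p -> p (proot p v) = proot p v.
Proof. by move/forallP/(_ v)/eqP. Qed.

Lemma root_p p v : acyc p -> proot p (p v) = proot p v.
Proof. by move=> a; rewrite /proot -iterSr iterS; exact: rootP. Qed.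

Lemma iter_fix p v k : p v = v -> iter k p v = v.
Proof. by move=> h; elim: k => //= k ->. Qed.

Lemma root_fix p v : p v = v -> proot p v = v.
Proof. exact: iter_fix. Qed.

Lemma hsumS p v N : p (iter N.+1 p v) = iter N.+1 p v -> p v != v ->
  (\sum_(0 <= k < N.+1) bnf p v k = (\sum_(0 <= k < N.+1) bnf p (p v) k).+1)%N.
Proof.
move=> hN nv; rewrite big_nat_recl // big_nat_recr //=.
rewrite /bnf /= nv -iterSr hN eqxx addn0 add1n; congr _.+1.
by apply: eq_bigr => k _; rewrite -iterSr iterS.
Qed.

Lemma hgtS p v : acyc p -> p v != v -> hgt p v = (hgt p (p v)).+1.
Proof.
move=> a nv; have n0 : (0 < n)%N by case: v {nv} => /= k; apply: leq_ltn_trans.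
have := @hsumS p v n.-1; rewrite prednK //; apply => //; exact: rootP.
Qed.

Lemma acyc_ind p (P : V -> Prop) : acyc p ->
  (forall v, (p v != v -> P (p v)) -> P v) -> forall v, P v.
Proof.
move=> a IH v; move: {2}(hgt p v) (leqnn (hgt p v)) => N.
elim: N v => [|N IHN] v hv; apply: IH => nv; move: hv; rewrite (hgtS a nv) //.
by move=> h; apply: IHN.
Qed.

Lemma height_reach p (h : V -> nat) :
  (forall v, p v != v -> (h (p v) < h v)%N) -> forall v, reach p v.
Proof.
move=> hh v; move: {2}(h v) (leqnn (h v)) => N.
elim: N v => [|N IH] v hv; case: (eqVneq (p v) v) => [e|ne]; try by exists 0%N.
  by have := hh v ne; rewrite ltnNge (leq_trans hv) ?leq0n.
have [k hk] := IH (p v) (leq_trans (hh v ne) hv) .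
by exists k.+1; rewrite iterSr.
Qed.

Lemma reach_acyc p : (forall v, reach p v) -> acyc p.
Proof.
move=> r; apply/forallP => v; apply/eqP; have [k hk] := r v.
have fc := fconnect_iter p k v.
have d := findex_max fc; have e := iter_findex fc.
have ln : (findex p v (iter k p v) <= n)%N.
  apply: ltnW; apply: (leq_trans d); rewrite /order.
  by apply: (leq_trans (max_card _)); rewrite card_ord.
set d0 := findex _ _ _ in ln e.
have E : iter n p v = iter (n - d0) p (iter d0 p v) by rewrite -iterD subnK.
by rewrite /proot E e (iter_fix _ hk).
Qed.

Lemma height_acyc p (h : V -> nat) :
  (forall v, p v != v -> (h (p v) < h v)%N) -> acyc p.
Proof. by move=> hh; apply: reach_acyc; apply: height_reach hh. Qed.

Lemma upd_acyc_rm p i : acyc p -> acyc (upd p i i).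
Proof.
move=> a; apply: (@height_acyc _ (hgt p)) => v; rewrite updE.
case: (eqVneq v i) => [->|vi]; first by rewrite !eqxx.
by move=> nv; rewrite (hgtS a nv).
Qed.

Lemma upd_acyc p i m : acyc p -> p i = i -> proot p m != i ->
  acyc (upd p i m) /\
  forall v, proot (upd p i m) v = if proot p v == i then proot p m else proot p v.
Proof.
move=> a pi rm.
have ri : proot p i = i by apply: root_fix.
have mi : m != i by apply: contraNneq rm => ->; rewrite ri.
have a' : acyc (upd p i m).
  apply: (@height_acyc _ (fun v => if proot p v == i then (hgt p v + hgt p m).+1 else hgt p v)).
  move=> v; rewrite updE; case: (eqVneq v i) => [->|vi].
    by move=> _; rewrite ri eqxx (negbTE rm) ltnS leq_addl.
  move=> nv; rewrite root_p // (hgtS a nv); case: ifP => _ //.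
split => //; apply: (acyc_ind a') => v IH.
case: (eqVneq (upd p i m v) v) => [e|ne].
  rewrite root_fix //; move: e; rewrite updE; case: (eqVneq v i) => [->|vi pv].
    by move=> e; rewrite e eqxx in mi.
  by rewrite root_fix // (negbTE vi).
rewrite -root_p // IH //; move: ne; rewrite updE; case: (eqVneq v i) => [->|vi _].
  by rewrite (negbTE rm) ri eqxx.
by rewrite root_p.
Qed.

Lemma upd_upd_rm p i m : p i = i -> upd (upd p i m) i i = p.
Proof. by move=> pi; apply/ffunP => v; rewrite !updE; case: eqP => // ->. Qed.

Lemma upd_root_ne p i m : acyc (upd p i m) -> p i = i -> m != i -> proot p m != i.
Proof.
move=> a' pi mi; set p' := upd p i m in a'.
have a : acyc p by rewrite -(upd_upd_rm m pi); exact: upd_acyc_rm.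
have H : forall v, proot p v = i -> (hgt p' i <= hgt p' v)%N.
  apply: (acyc_ind a) => v IH rv.
  case: (eqVneq (p v) v) => [e|ne].
    by move: rv; rewrite root_fix // => ->.
  have vi : v != i by apply: contraNneq ne => ->; rewrite pi.
  have pv : p' v = p v by rewrite /p' updE (negbTE vi).
  have ne' : p' v != v by rewrite pv.
  rewrite (hgtS a' ne') pv; apply: ltnW; rewrite ltnS; apply: IH => //.
  by rewrite root_p.
apply/eqP => rm; have := H m rm.
have ne : p' i != i by rewrite /p' updE eqxx.
by rewrite (hgtS a' ne) /p' updE eqxx ltnn.
Qed.

Lemma root_rm p i v : acyc p -> proot (upd p i i) v = i -> proot p v = proot p i.
Proof.
move=> a; move: v; apply: (acyc_ind (upd_acyc_rm i a)) => v IH.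
case: (eqVneq (upd p i i v) v) => [e|ne].
  by rewrite root_fix // => ->.
have vi : v != i by apply: contraNneq ne => ->; rewrite updE eqxx.
have pv : upd p i i v = p v by rewrite updE (negbTE vi).
rewrite -root_p ?upd_acyc_rm // => h; rewrite -(root_p _ a) -pv; exact: IH.
Qed.

End Par.
From mathcomp Require Import ring.
Local Open Scope ring_scope.

Lemma upd_upd n (p : {ffun 'I_n -> 'I_n}) i a b : upd (upd p i a) i b = upd p i b.
Proof. by apply/ffunP => v; rewrite !updE; case: eqP. Qed.

Lemma upd_id n (p : {ffun 'I_n -> 'I_n}) i : upd p i (p i) = p.
Proof. by apply/ffunP => v; rewrite !updE; case: eqP => // ->. Qed.

Lemma if_nat (C : numClosedFieldType) (b : bool) (x : C) : (if b then x else 0) = x * b%:R.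
Proof. by case: b; rewrite ?mulr1 ?mulr0. Qed.

Section Ident.
Variables (C : numClosedFieldType) (n : nat) (W : 'M[C]_n).
Notation V := 'I_n.
Implicit Types (p : {ffun V -> V}) (v i m : V).

Definition psize p := #|[set v | p v != v]|.
Definition wp p := \prod_(v | p v != v) W v (p v).
Definition Pk k p := acyc p && (psize p == k).
Definition qp k i j := \sum_(p | Pk k p && (proot p i == j)) wp p.
Definition sg k := \sum_(p | Pk k p) wp p.

Lemma psize_upd p i m : p i = i -> m != i -> psize (upd p i m) = (psize p).+1.
Proof.
move=> pi mi; rewrite /psize.
have -> : [set v | upd p i m v != v] = i |: [set v | p v != v].
  apply/setP => v; rewrite !inE updE; case: (eqVneq v i) => [->|vi] //=.
by rewrite cardsU1 inE pi eqxx.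
Qed.

Lemma wp_upd p i m : p i = i -> m != i -> wp (upd p i m) = W i m * wp p.
Proof.
move=> pi mi; rewrite /wp (bigD1 i) /=; last by rewrite updE eqxx.
rewrite updE eqxx; congr (_ * _).
transitivity (\prod_(v | (p v != v) && (v != i)) W v (p v)).
  by apply: eq_big => v; rewrite updE; case: (eqVneq v i) => [->|vi]; rewrite ?andbF.
apply: eq_bigl => v; case: (eqVneq v i) => [->|]; by rewrite ?pi ?eqxx ?andbT.
Qed.

Variables (i j : V).
Definition Dm m p := W i m * wp p * ((proot p i == j)%:R - (proot p m == j)%:R).
Definition Gp p := wp p * ((i == j)%:R - (proot p i == j)%:R).

Lemma partA_m k m : m != i ->
  \sum_(p | Pk k p && (p i == i)) Dm m p = \sum_(p | Pk k.+1 p && (p i == m)) Gp p.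
Proof.
move=> mi.
rewrite [RHS](reindex_onto (fun p => upd p i m) (fun p => upd p i i)); last first.
  by move=> p /andP[_ /eqP pi]; rewrite upd_upd -pi upd_id.
rewrite big_mkcond [RHS]big_mkcond; apply: eq_bigr => p _.
case: (eqVneq (p i) i) => [pi|pi]; last first.
  have -> : (upd (upd p i m) i i == p) = false.
    by apply/eqP => /ffunP/(_ i); rewrite !updE eqxx => e; rewrite -e eqxx in pi.
  by rewrite !andbF.
rewrite upd_upd_rm // eqxx updE eqxx !andbT /Pk psize_upd // eqSS.
have ri : proot p i = i by apply: root_fix.
case a: (acyc p); last first.
  case a': (acyc (upd p i m)) => //.
  by move: a; rewrite -(upd_upd_rm m pi) upd_acyc_rm.
case: (eqVneq (proot p m) i) => [rm|rm].
  case a': (acyc (upd p i m)); first by have := upd_root_ne a' pi mi; rewrite rm eqxx.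
  by case: (_ == k) => //; rewrite /Dm ri rm subrr mulr0.
have [-> rE] := upd_acyc a pi rm.
case: (_ == k) => //.
by rewrite /Gp /Dm rE ri eqxx wp_upd // eqxx.
Qed.

Lemma partA k :
  \sum_(m | m != i) \sum_(p | Pk k p && (p i == i)) Dm m p
  = \sum_(p | Pk k.+1 p && (p i != i)) Gp p.
Proof.
rewrite [RHS](partition_big (fun p => p i) (fun m => m != i)) //=; last first.
  by move=> p /andP[].
apply: eq_bigr => m mi; rewrite partA_m //; apply: eq_bigl => p.
by case: (eqVneq (p i) m) => [->|]; rewrite ?mi ?andbT ?andbF.
Qed.


Definition Sx k m p := [&& m != i, Pk k p, p i != i & proot (upd p i i) m != i].

Lemma S_imp k m p : Sx k m p -> Sx k (p i) (upd p i m).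
Proof.
case/and4P => mi /andP[a /eqP sz] pi r0.
set p0 := upd p i i.
have p0i : p0 i = i by rewrite /p0 updE eqxx.
have a0 : acyc p0 := upd_acyc_rm i a.
have ep : p = upd p0 i (p i) by rewrite /p0 upd_upd upd_id.
have ep' : upd p i m = upd p0 i m by rewrite /p0 upd_upd.
have [a' _] := upd_acyc a0 p0i r0.
have r1 : proot p0 (p i) != i by apply: upd_root_ne => //; rewrite -ep.
apply/and4P; split => //.
- apply/andP; split; first by rewrite ep'.
  by rewrite ep' psize_upd // -sz ep psize_upd // upd_upd -ep.
- by rewrite updE eqxx.
- by rewrite upd_upd.
Qed.

Lemma phiK : involutive (fun x : V * {ffun V -> V} => (x.2 i, upd x.2 i x.1)).
Proof. by case=> m p /=; rewrite updE eqxx upd_upd upd_id. Qed.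

Lemma D_anti k m p : Sx k m p -> Dm (p i) (upd p i m) = - Dm m p.
Proof.
case/and4P => mi /andP[a /eqP sz] pi r0.
set p0 := upd p i i in r0.
have p0i : p0 i = i by rewrite /p0 updE eqxx.
have a0 : acyc p0 := upd_acyc_rm i a.
have ep : p = upd p0 i (p i) by rewrite /p0 upd_upd upd_id.
have ep' : upd p i m = upd p0 i m by rewrite /p0 upd_upd.
have r1 : proot p0 (p i) != i by apply: upd_root_ne => //; rewrite -ep.
have ri : proot p0 i = i by apply: root_fix.
have [_ E1] := upd_acyc a0 p0i r0.
have [_ E2] := upd_acyc a0 p0i r1.
rewrite /Dm ep' !E1 ri eqxx (negbTE r1) wp_upd //.
rewrite [in RHS]ep !E2 ri eqxx (negbTE r0) wp_upd //.
ring.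
Qed.

Lemma partB k :
  \sum_(m | m != i) \sum_(p | Pk k p && (p i != i)) Dm m p = 0.
Proof.
rewrite pair_big /=.
set s := (X in X = 0).
have -> : s = \sum_(x | Sx k x.1 x.2) Dm x.1 x.2.
  rewrite /s big_mkcond [RHS]big_mkcond; apply: eq_bigr => [[m p]] _ /=.
  rewrite /Sx; case: (m != i) => //=; case Pkp: (Pk k p) => //=.
  case: (eqVneq (p i) i) => //= pi.
  case: (eqVneq (proot (upd p i i) m) i) => //= r0.
  move/andP: Pkp => [a _].
  by rewrite /Dm (root_rm a r0) subrr mulr0.
set phi := (fun x : V * {ffun V -> V} => (x.2 i, upd x.2 i x.1)).
have e : \sum_(x | Sx k x.1 x.2) Dm x.1 x.2 = - \sum_(x | Sx k x.1 x.2) Dm x.1 x.2.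
  rewrite {1}(reindex_inj (inv_inj phiK)) -sumrN.
  apply: eq_big => [[m p]|[m p] hS] /=.
    apply/idP/idP => [h|]; last exact: S_imp.
    by have := S_imp h; rewrite /= updE eqxx upd_upd upd_id.
  move: hS => /= hS; apply: (D_anti (k:=k)); have := S_imp hS; by rewrite /= updE eqxx upd_upd upd_id.
set t := \sum_(x | Sx k x.1 x.2) Dm x.1 x.2 in e *.
have h2 : t *+ 2 == 0 by rewrite mulr2n {2}e subrr.
by move: h2; rewrite mulrn_eq0 => /eqP.
Qed.


Lemma ident k : qp k.+1 i j + \sum_(m | m != i) W i m * (qp k i j - qp k m j)
  = (i == j)%:R * sg k.+1.
Proof.
have E1 : forall m, W i m * (qp k i j - qp k m j) = \sum_(p | Pk k p) Dm m p.
  move=> m; rewrite /qp !big_mkcondr -sumrB mulr_sumr.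
  by apply: eq_bigr => p _; rewrite !if_nat /Dm; ring.
under eq_bigr => m _ do rewrite E1 (bigID (fun p => p i == i)) /=.
rewrite big_split /= partA partB addr0.
rewrite /qp big_mkcondr (bigID (fun p => p i == i)) /=.
rewrite -addrA -big_split /=.
rewrite /sg (bigID (fun p => p i == i) (Pk k.+1)) /= mulrDr !mulr_sumr.
congr (_ + _); apply: eq_bigr => p /andP[_ hp].
  by rewrite if_nat root_fix ?(eqP hp) // mulrC.
by rewrite if_nat /Gp; ring.
Qed.

Lemma q0 : qp 0 i j = (i == j)%:R * sg 0.
Proof.
rewrite /qp /sg big_mkcondr mulr_sumr; apply: eq_bigr => p /andP[_ /eqP sz].
have fx : forall v, p v = v.
  move=> v; move/eqP: sz; rewrite cards_eq0 => /eqP/setP/(_ v).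
  by rewrite !inE => /negbFE/eqP.
by rewrite root_fix // if_nat mulrC.
Qed.

Lemma qbig k : (n < k)%N -> qp k i j = 0.
Proof.
move=> hk; apply: big_pred0 => p; apply/negP => /andP[/andP[_ /eqP e] _].
have h : (psize p <= n)%N.
  by rewrite /psize; apply: leq_trans (max_card _) _; rewrite card_ord.
by rewrite -e ltnNge h in hk.
Qed.

End Ident.

Section Bridge.
Variables (C : numClosedFieldType) (n : nat) (W : 'M[C]_n).
Notation V := 'I_n.
Implicit Types (p : {ffun V -> V}) (v i m : V) (F : {set V * V}).

Definition graph p : {set V * V} := [set a | (p a.1 == a.2) && (a.1 != a.2)].
Lemma in_graph p a : (a \in graph p) = (p a.1 == a.2) && (a.1 != a.2).
Proof. by rewrite ?in_graph ?inE. Qed.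

Definition ungraph F : {ffun V -> V} :=
  [ffun v => if [pick a in F | a.1 == v] is Some a then a.2 else v].
Definition nz p := [forall v, (p v != v) ==> (W v (p v) != 0)].

Lemma G1 p : ungraph (graph p) = p.
Proof.
apply/ffunP => v; rewrite ffunE; case: pickP => [a /andP[ha /eqP e]|h].
  by move: ha; rewrite ?in_graph ?inE -e => /andP[/eqP].
case: (eqVneq (p v) v) => // ne; have := h (v, p v).
by rewrite ?in_graph /= !eqxx eq_sym ne.
Qed.

Lemma graph_imset p : graph p = [set (v, p v) | v in [set v | p v != v]].
Proof.
apply/setP => [[x y]]; rewrite ?in_graph ?inE /=; apply/idP/imsetP.
  by case/andP => /eqP <- ne; exists x; rewrite // inE eq_sym.
by case=> v; rewrite ?in_graph ?inE => hv [-> ->]; rewrite eqxx eq_sym.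
Qed.

Lemma sgw p : sg_weight W (graph p) = wp W p.
Proof.
rewrite /sg_weight graph_imset big_imset /=; last by move=> x y _ _ [].
by apply: eq_bigl => v; rewrite ?in_graph ?inE.
Qed.

Lemma card_graph p : #|graph p| = psize p.
Proof. by rewrite graph_imset card_imset // => x y []. Qed.

Lemma outdeg_graph p v : outdeg (graph p) v = (p v != v).
Proof.
rewrite /outdeg; case: (eqVneq (p v) v) => [fx|ne] /=.
  apply/eqP; rewrite cards_eq0; apply/eqP/setP => [[x y]]; rewrite ?in_graph !inE /=.
  apply/negbTE/negP => /andP[/andP[/eqP h1 h2] /eqP h3].
  by subst x; rewrite -h1 fx eqxx in h2.
have -> : [set a in graph p | a.1 == v] = [set (v, p v)]; last by rewrite cards1.
apply/setP => [[x y]]; rewrite ?in_graph !inE /= xpair_eqE.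
apply/idP/idP => [/andP[/andP[/eqP h1 h2] /eqP h3]|/andP[/eqP h1 /eqP h2]].
  by subst; rewrite !eqxx.
by subst; rewrite !eqxx eq_sym ne.
Qed.

Definition erel F := [rel x y : V | ((x, y) \in F) || ((y, x) \in F)].

Lemma erel_sym F : connect_sym (erel F).
Proof. by apply: sym_connect_sym => x y /=; rewrite orbC. Qed.

Lemma wc_graph p x y : acyc p -> weakly_conn (graph p) x y = (proot p x == proot p y).
Proof.
move=> a; rewrite /weakly_conn -/(erel (graph p)).
apply/idP/idP => [h|/eqP e].
  have cl : closed (erel (graph p)) [pred u | proot p u == proot p x].
    move=> u w /=; rewrite ?in_graph !inE /= => /orP[] /andP[/eqP <- _].
      by rewrite root_p.
    by rewrite root_p.
  by have := closed_connect cl h; rewrite !inE eqxx => /esym/eqP ->.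
have toroot : forall u, connect (erel (graph p)) u (proot p u).
  apply: (acyc_ind a) => u IH.
  case: (eqVneq (p u) u) => [fx|ne]; first by rewrite root_fix.
  rewrite -root_p //; apply: connect_trans (IH ne); apply: connect1.
  by rewrite /= inE /= eqxx eq_sym ne.
apply: connect_trans (toroot x) _; rewrite e (erel_sym (graph p)); exact: toroot.
Qed.

Lemma tree_graph p i j : acyc p -> in_tree_rooted (graph p) i j = (proot p i == j).
Proof.
move=> a; rewrite /in_tree_rooted wc_graph // outdeg_graph.
case: (eqVneq (p j) j) => [fx|ne] /=; first by rewrite (root_fix fx) andbT.
rewrite andbF; apply/esym/negbTE; apply: contra ne => /eqP <-.
by rewrite rootP.
Qed.

Lemma reach_p p x : reach p x <-> reach p (p x).
Proof.
split=> [[k hk]|[k hk]]; first by exists k; rewrite -iterSr iterS !hk.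
by exists k.+1; rewrite iterSr.
Qed.

Lemma reachP p u : reflect (reach p u) [exists y, fconnect p u y && (p y == y)].
Proof.
apply: (iffP existsP) => [[y /andP[c /eqP fy]]|[k hk]].
  by exists (findex p u y); rewrite iter_findex.
by exists (iter k p u); rewrite fconnect_iter hk eqxx.
Qed.

Lemma forest_graph p : in_forest W (graph p) = acyc p && nz p.
Proof.
apply/idP/idP => [/andP[/forallP ha /forallP hc]|/andP[a hnz]].
  apply/andP; split.
    apply: reach_acyc => v.
    have /existsP[r /andP[rin /andP[r0 _]]] := hc v.
    rewrite ?in_graph ?inE /weakly_conn -/(erel (graph p)) in rin.
    rewrite outdeg_graph eqb0 negbK in r0.
    have cl : closed (erel (graph p)) [pred u | [exists y, fconnect p u y && (p y == y)]].
      move=> u w /=; rewrite ?in_graph !inE /= => /orP[] /andP[/eqP <- _].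
        by apply/reachP/reachP; rewrite -reach_p.
      by apply/reachP/reachP; rewrite -reach_p.
    have := closed_connect cl rin; rewrite !inE => e.
    by apply/reachP; rewrite e; apply/reachP; exists 0%N; apply/eqP.
  apply/forallP => v; apply/implyP => ne.
  have := ha (v, p v); rewrite ?in_graph ?inE /= eqxx eq_sym ne /= /is_arc /=.
  by case/andP.
apply/andP; split.
  apply/forallP => [[x y]]; apply/implyP; rewrite ?in_graph ?inE /= => /andP[/eqP <- ne].
  rewrite /is_arc /= ne /=; have ne' : p x != x by rewrite eq_sym.
  exact: (implyP (forallP hnz x) ne').
apply/forallP => x; apply/existsP; exists (proot p x).
rewrite ?in_graph ?inE wc_graph // (root_fix (rootP x a)) eqxx /= outdeg_graph (rootP x a) eqxx /=.
apply/forallP => v; apply/implyP; rewrite ?in_graph ?inE wc_graph // => /eqP e.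
apply/implyP => nr; rewrite outdeg_graph.
case: (eqVneq (p v) v) => // fx.
by rewrite e (root_fix fx) eqxx in nr.
Qed.

Lemma outdeg_le1 F v : in_forest W F -> (outdeg F v <= 1)%N.
Proof.
case/andP => _ /forallP/(_ v)/existsP[r /andP[_ /andP[/eqP r0 /forallP h]]].
case: (eqVneq v r) => [->|ne]; first by rewrite r0.
have := h v; rewrite ?in_graph ?inE /weakly_conn connect0 ne /= => /eqP ->.
by [].
Qed.

Lemma G2 F : in_forest W F -> graph (ungraph F) = F.
Proof.
move=> hF; apply/setP => [[x y]]; rewrite ?in_graph ?inE ffunE /=.
case: pickP => [[x' y'] /andP[hb /eqP e]|h] /=; last first.
  have := h (x, y); rewrite /= eqxx andbT => ->.
  by case: eqP.
simpl in e; subst x'.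
have u := outdeg_le1 x hF; move/card_le1_eqP: u => u.
apply/idP/idP => [/andP[/eqP <- _]|hxy] //.
have := u (x, y') (x, y); rewrite ?in_graph !inE hb hxy eqxx => /(_ isT isT) [e]; subst y'.
rewrite eqxx /=.
by case/andP: hF => /forallP/(_ (x, y)); rewrite hxy /= /is_arc /= => /andP[].
Qed.

Lemma bridge k i j : Qk W k i j = qp W k i j.
Proof.
rewrite mxE (reindex_onto graph ungraph); last first.
  by move=> F /andP[/andP[hF _] _]; exact: G2.
rewrite /qp big_mkcond [RHS]big_mkcond; apply: eq_bigr => p _.
rewrite G1 eqxx andbT sgw card_graph forest_graph /Pk.
case a: (acyc p) => //=; rewrite tree_graph //.
case hz: (nz p) => //=.
have -> : wp W p = 0.
  apply/eqP/prodf_eq0; move/negbT: hz; rewrite negb_forall => /existsP[v].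
  by rewrite negb_imply negbK => /andP[ne z]; exists v.
by case: ifP.
Qed.

End Bridge.

Section Final.
Variables (C : numClosedFieldType) (n : nat) (W : 'M[C]_n).

Lemma QkE k : Qk W k = \matrix_(i, j) qp W k i j.
Proof. by apply/matrixP => i j; rewrite bridge mxE. Qed.

Lemma Mident k : laplacian W *m Qk W k = (sg W k.+1)%:M - Qk W k.+1.
Proof.
rewrite !QkE; apply/matrixP => i j; rewrite !mxE (bigD1 i) //=.
rewrite {1}/laplacian !mxE eqxx.
under eq_bigr => m hm do rewrite /laplacian !mxE eq_sym (negbTE hm).
rewrite -mulr_natl -(ident W i j k) [qp W k.+1 i j + _]addrC addrK.
rewrite mulr_suml -big_split /=; apply: eq_bigr => m _; ring.
Qed.

Lemma Q0 : Qk W 0 = (sg W 0)%:M.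
Proof. by apply/matrixP => i j; rewrite QkE !mxE q0 mulr_natl. Qed.

Lemma Qbig : Qk W (n * n).+1 = 0.
Proof.
apply/matrixP => i j; rewrite QkE !mxE qbig //.
have h : forall m, (m < (m * m).+1)%N by case=> // m; rewrite ltnS leq_pmulr.
exact: h.
Qed.

End Final.

Unset Implicit Arguments.
Set Strict Implicit.
Set Printing Implicit Defensive.

Theorem proposition13 (C : numClosedFieldType) (n : nat) (W : 'M[C]_n)
  (hn : (1 < n)%N)
  (hloop : forall i, W i i = 0)
  (hpos : forall i j, 0 <= W i j)
  (lambda : C) (hlam0 : lambda != 0)
  (heig : eigenvalue (laplacian W) lambda)
  (j : 'I_n) (hj : col j (Qtau W (- lambda^-1)) != 0) :
  laplacian W *m col j (Qtau W (- lambda^-1)) = lambda *: col j (Qtau W (- lambda^-1)).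
Proof.
set tau := - lambda^-1.
set L := laplacian W.
set Q := Qtau W tau.
set N := (n * n)%N.
have LQ : L *m Q = \sum_(k < N.+1) tau ^+ k *: ((sg W k.+1)%:M - Qk W k.+1).
  rewrite /Q /Qtau mulmx_sumr; apply: eq_bigr => k _.
  by rewrite -scalemxAr Mident.
set c := sg W 0 + \sum_(k < N.+1) tau ^+ k.+1 * sg W k.+1.
have M : Q + tau *: (L *m Q) = c%:M.
  rewrite LQ scaler_sumr.
  under eq_bigr => k _ do rewrite scalerA -exprS scalerBr.
  rewrite sumrB /Q /Qtau big_ord_recl [X in _ - X]big_ord_recr /= Qbig scaler0 addr0.
  rewrite expr0 scale1r Q0 addrA addrAC.
  have -> : \sum_(i < N) tau ^+ (lift ord0 i) *: Qk W (lift ord0 i)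
          = \sum_(i < N) tau ^+ i.+1 *: Qk W i.+1.
    by apply: eq_bigr => k _; rewrite lift0.
  rewrite addrK /c raddfD /=; congr (_ + _).
  rewrite (@raddf_sum _ _ (@scalar_mx C n)).
  by apply: eq_bigr => k _; rewrite scale_scalar_mx.
have c0 : c = 0.
  have [v hv nv] := eigenvalueP heig.
  have : v *m (Q + tau *: (L *m Q)) = 0.
    rewrite mulmxDr -scalemxAr mulmxA hv -scalemxAl scalerA /tau mulNr mulVf //.
    by rewrite scaleN1r addrN.
  rewrite M mul_mx_scalar => /eqP; rewrite scaler_eq0 (negbTE nv) orbF.
  by move/eqP.
move: M; rewrite c0 -scalemx1 scale0r => /eqP; rewrite addr_eq0 => /eqP MQ.
have LQ' : L *m Q = lambda *: Q.
  by rewrite {2}MQ scalerN scalerA /tau mulrN mulfV // scaleN1r opprK.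
by rewrite !colE mulmxA LQ' scalemxAl.
Qed.
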